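(* Let $e\in\mathbb{Z}_{\ge0}$ and let $A\subseteq\mathbb{R}^2$ be finite and not contained in any element of $\mathcal{C}_{\le e}$. Let $\mathcal{R}$ be the family of subsets $B\subseteq A$ with $|B|=\binom{e+2}{2}$ such that $B$ is not contained in any element of $\mathcal{C}_{\le e}$. Then \[ |\mathcal{R}|\geq\frac{1}{2^{\binom{e+2}{2}-1}}|A|. \]
   Context: For $k\in\mathbb{Z}^+$, a curve of degree $k$ is the zero set in $\mathbb{R}^2$ of a polynomial in $\mathbb{R}[x,y]$ of degree exactly $k$; $\mathcal{C}_k$ is the family of such curves, $\mathcal{C}_{\le k}:=\bigcup_{j=1}^k\mathcal{C}_j$, and $\mathcal{C}_{\le 0}:=\emptyset$. *)

(* Defs.v *)
From HB Require Import structures.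
From mathcomp Require Import all_boot all_order all_algebra.
From mathcomp Require Import finmap.
From mathcomp Require Import mpoly.
From mathcomp Require Import boolp reals.

Set Implicit Arguments.
Unset Strict Implicit.
Unset Printing Implicit Defensive.

Import Order.TTheory GRing.Theory Num.Theory.
Local Open Scope ring_scope.

Definition pt_vec (R : realType) (z : R * R) : 'I_2 -> R :=
  fun i => if val i == 0%N then z.1 else z.2.

Definition peval2 (R : realType) (p : {mpoly R[2]}) (z : R * R) : R :=
  p.@[pt_vec z].

(* total degree: msize p = deg p + 1 for p <> 0, msize 0 = 0 *)
Definition has_degree (R : realType) (p : {mpoly R[2]}) (k : nat) : Prop :=
  msize p = k.+1.

Definition is_curve (R : realType) (k : nat) (C : R * R -> Prop) : Prop :=
  (0 < k)%N /\ exists p : {mpoly R[2]}, has_degree p k /\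
     C = (fun z => peval2 p z = 0).

Definition in_curve_le (R : realType) (e : nat) (S : R * R -> Prop) : Prop :=
  exists k : nat, (1 <= k <= e)%N /\
    exists C : R * R -> Prop, is_curve k C /\ (forall z, S z -> C z).

(* Main.v *)
Require Import Defs.
From HB Require Import structures.
From mathcomp Require Import all_boot all_order all_algebra.
From mathcomp Require Import finmap.
From mathcomp Require Import mpoly.
From mathcomp Require Import boolp reals.
Import Order.TTheory GRing.Theory Num.Theory.
Local Open Scope ring_scope.
Set Implicit Arguments.
Unset Strict Implicit.
Unset Printing Implicit Defensive.
Lemma kernel_exists (F : fieldType) (I J : finType) (f : I -> J -> F) :
  (#|I| < #|J|)%N ->
  exists2 v : J -> F, (exists j, v j != 0) & forall i, \sum_j f i j * v j = 0.
Proof.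
move=> hIJ.
pose Mt : 'M[F]_(#|J|, #|I|) := \matrix_(j, i) f (enum_val i) (enum_val j).
have nf : ~~ row_free Mt.
  rewrite /row_free; apply/negP => /eqP h.
  by have := rank_leq_col Mt; rewrite h leqNgt hIJ.
rewrite -kermx_eq0 in nf.
have [k hk] : exists k, row k (kermx Mt) != 0.
  case: (pickP (fun k => row k (kermx Mt) != 0)) => [k hk|h]; first by exists k.
  exfalso; move/negP: nf; apply; apply/eqP/matrixP => a b.
  by move: (h a) => /negbFE/eqP/matrixP/(_ 0 b); rewrite !mxE.
set u := row k (kermx Mt) in hk.
have hu : u *m Mt = 0 by apply/sub_kermxP; rewrite row_sub.
exists (fun j => u 0 (enum_rank j)).
  case: (pickP (fun j => u 0 (enum_rank j) != 0)) => [j hj|h]; first by exists j.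
  exfalso; move/negP: hk; apply; apply/eqP/matrixP => a b.
  rewrite ord1 mxE; move: (h (enum_val b)) => /negbFE/eqP.
  by rewrite enum_valK /u mxE => ->; rewrite mxE.
move=> i; have /matrixP/(_ 0 (enum_rank i)) := hu; rewrite !mxE => h0; apply: etrans _ h0.
rewrite (reindex (@enum_rank J)) /=; last first.
  by apply: onW_bij; apply: enum_rank_bij.
apply: eq_bigr => j _; rewrite !mxE mulrC.
by rewrite !enum_rankK.
Qed.

From mathcomp Require Import zify.

Lemma sum_lt n k : (\sum_(j < n) (j < k) = minn k n)%N.
Proof.
elim: n => [|n IH]; first by rewrite big_ord0 minn0.
rewrite big_ord_recr /= IH; case: (ltnP n k) => h; lia.
Qed.

Lemma sum_sub n : (\sum_(i < n) (n - i) = 'C(n.+1, 2))%N.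
Proof.
elim: n => [|n IH]; first by rewrite big_ord0.
rewrite big_ord_recl /= subn0 binS bin1 addnC; congr (_ + _)%N.
rewrite -IH; apply: eq_bigr => i _; rewrite /bump /=; lia.
Qed.

Lemma card_tri n : #|[pred x : 'I_n * 'I_n | (x.1 + x.2 < n)%N]| = 'C(n.+1, 2).
Proof.
rewrite -sum1_card big_mkcond /= -(pair_big xpredT xpredT (fun i j : 'I_n => if (i + j < n)%N then 1%N else 0%N)) /=.
rewrite -sum_sub; apply: eq_bigr => i _.
rewrite -[X in _ = X](@minn_idPl (n - i) n _) ?leq_subr // -sum_lt.
by apply: eq_bigr => j _; case: ifP; case: ltnP => //; lia.
Qed.

Lemma card_Mon e : #|{: 'X_{1..2 < e.+1}}| = 'C(e.+2, 2).
Proof.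
pose phi (m : 'X_{1..2 < e.+1}) : 'I_e.+1 * 'I_e.+1 := (inord (m ord0), inord (m (lift ord0 ord0))).
have hdeg (m : 'X_{1..2 < e.+1}) : mdeg m = (m ord0 + m (lift ord0 ord0))%N.
  by rewrite mdegE big_ord_recl big_ord1.
have hb (m : 'X_{1..2 < e.+1}) : (m ord0 + m (lift ord0 ord0) < e.+1)%N by rewrite -hdeg bmdeg.
have phi_inj : injective phi.
  move=> m1 m2 /pair_equal_spec [h1 h2]; apply: val_inj; apply/mnmP => i.
  have := hb m1; have := hb m2 => b2 b1.
  move: h1 h2; rewrite /phi => /(congr1 (@nat_of_ord _)); rewrite !inordK; try lia.
  move=> h1 /(congr1 (@nat_of_ord _)); rewrite !inordK; try lia.
  move=> h2; case: i => [[|[|i]] hi] //.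
  - by have -> : Ordinal hi = ord0 by apply: val_inj.
  - by have -> : Ordinal hi = lift ord0 ord0 by apply: val_inj.
rewrite -cardsT -(card_imset setT phi_inj) -card_tri; apply: eq_card => x.
rewrite inE /=; apply/imsetP/idP.
  move=> [m _ ->] /=; have h := hb m; rewrite !inordK; lia.
case: x => a b /= hx.
pose mm : 'X_{1..2} := [multinom (if i == ord0 then nat_of_ord a else nat_of_ord b) | i < 2].
have hmm : (mdeg mm < e.+1)%N.
  by rewrite mdegE big_ord_recl big_ord1 /mm !mnmE /=.
exists (BMultinom hmm) => //.
rewrite /phi /= /mm !mnmE /=.
by congr pair; apply: val_inj; rewrite /= inordK.
Qed.

Section P.
Variable R : realType.
Variable e : nat.
Local Notation Mon := ('X_{1..2 < e.+1}).

Definition mon (m : 'X_{1..2}) (z : R * R) : R := \prod_(i < 2) pt_vec z i ^+ m i.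

Lemma curve_of (p : {mpoly R[2]}) (S : R * R -> Prop) z0 :
  p != 0 -> (msize p <= e.+1)%N -> peval2 p z0 = 0 ->
  (forall z, S z -> peval2 p z = 0) -> in_curve_le e S.
Proof.
move=> pn0 hs hz0 hS.
have h2 : (1 < msize p)%N.
  rewrite ltnNge; apply/negP => /msize1_polyC hp.
  move: hz0; rewrite /peval2 hp mevalC => hc.
  by move/eqP: pn0; apply; rewrite hp hc.
exists (msize p).-1; split.
  by apply/andP; split; [rewrite -ltnS prednK // ltnW | rewrite -ltnS prednK // ltnW].
exists (fun z => peval2 p z = 0); split; last by [].
split; first by rewrite -ltnS prednK // ltnW.
by exists p; split => //; rewrite /has_degree prednK // ltnW.
Qed.

Lemma msupp_mon (p : {mpoly R[2]}) (m : 'X_{1..2}) :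
  (msize p <= e.+1)%N -> (e.+1 <= mdeg m)%N -> p@_m = 0.
Proof.
move=> hs hm; apply/eqP; rewrite mcoeff_eq0; apply: msize_mdeg_ge.
exact: leq_trans hs hm.
Qed.

Lemma poly_expand (p : {mpoly R[2]}) :
  (msize p <= e.+1)%N -> p = \sum_(m : Mon) p@_m *: 'X_[bmnm m].
Proof.
move=> hs; apply/mpolyP => k.
rewrite raddf_sum /=.
have [hk|hk] := ltnP (mdeg k) e.+1.
  rewrite (bigD1 (BMultinom hk)) //= mcoeffZ mcoeffX eqxx mulr1 big1 ?addr0 //.
  move=> m hm; rewrite mcoeffZ mcoeffX.
  case: eqP => [hmk|]; last by rewrite mulr0.
  by exfalso; move/eqP: hm; apply; apply: val_inj.
rewrite msupp_mon // big1 // => m _; rewrite mcoeffZ mcoeffX.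
case: eqP => [hmk|]; last by rewrite mulr0.
by move: (bmdeg m); rewrite hmk ltnNge hk.
Qed.

Lemma peval_sum (p : {mpoly R[2]}) z :
  (msize p <= e.+1)%N -> peval2 p z = \sum_(m : Mon) p@_m * mon m z.
Proof.
move=> hs; rewrite /peval2 {1}(poly_expand hs) raddf_sum /=.
by apply: eq_bigr => m _; rewrite mevalZ mevalX.
Qed.

Definition pvec (v : Mon -> R) : {mpoly R[2]} := \sum_(m : Mon) v m *: 'X_[bmnm m].

Lemma pvec_coef v (m : Mon) : (pvec v)@_m = v m.
Proof.
rewrite /pvec raddf_sum /= (bigD1 m) //= mcoeffZ mcoeffX eqxx mulr1 big1 ?addr0 //.
move=> m' hm; rewrite mcoeffZ mcoeffX.
case: eqP => [hmk|]; last by rewrite mulr0.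
by exfalso; move/eqP: hm; apply; apply: val_inj.
Qed.

Lemma pvec_size v : (msize (pvec v) <= e.+1)%N.
Proof.
rewrite /pvec; apply: leq_trans (msize_sum _ _ _) _.
apply/bigmax_leqP => m _; apply: leq_trans (msizeZ_le _ _) _.
by rewrite msizeX; exact: bmdeg.
Qed.

Lemma pvec_eval v z : peval2 (pvec v) z = \sum_(m : Mon) v m * mon m z.
Proof.
rewrite /peval2 /pvec raddf_sum /=.
by apply: eq_bigr => m _; rewrite mevalZ mevalX.
Qed.

Variable A : {fset (R * R)}.
Definition inS (S : {set A}) (z : R * R) := exists2 b : A, b \in S & val b = z.
Definition good (S : {set A}) := ~ in_curve_le e (inS S).

Lemma mon0 z : mon 0%MM z = 1.
Proof. by rewrite /mon big1 // => i _; rewrite mnm0E expr0. Qed.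

Lemma good_card (S : {set A}) a : a \in S -> good S -> (#|{: Mon}| <= #|S|)%N.
Proof.
move=> ha hg; rewrite leqNgt; apply/negP => hlt.
have hI : (#|{: {x : A | x \in S}}| < #|{: Mon}|)%N by rewrite card_sig.
have [v [m hm] hv] := kernel_exists (fun (i : {x : A | x \in S}) (m : Mon) => mon m (val (val i))) hI.
apply: hg; apply: (@curve_of (pvec v) _ (val a)).
- by apply/eqP => h0; move: hm; rewrite -(pvec_coef v m) h0 mcoeff0 eqxx.
- exact: pvec_size.
- rewrite pvec_eval; apply: etrans _ (hv (exist _ a ha)); apply: eq_bigr => m' _; exact: mulrC.
- move=> z [b hb <-]; rewrite pvec_eval; apply: etrans _ (hv (exist _ b hb)).
  by apply: eq_bigr => m' _; exact: mulrC.
Qed.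

Lemma good_remove (B : {set A}) a : a \in B -> good B -> (#|{: Mon}| < #|B|)%N ->
  exists b, [/\ b \in B, b != a & good (B :\ b)].
Proof.
move=> ha hg hlt.
have hJ : (#|{: Mon}| < #|{: {x : A | x \in B}}|)%N by rewrite card_sig.
have [w hw0 hw] := kernel_exists (fun (m : Mon) (j : {x : A | x \in B}) => mon m (val (val j))) hJ.
pose ja : {x : A | x \in B} := exist _ a ha.
have [j [hj hja]] : exists j, w j != 0 /\ val j != a.
  case: (pselect (exists j, w j != 0 /\ val j != a)) => // hnot; exfalso.
  have hall : forall j, ~ (w j != 0 /\ val j != a) by move=> j hj; apply: hnot; exists j.
  case: hw0 => j0 hj0.
  have hz : forall j, j != ja -> w j = 0.
    move=> j hj; apply/eqP; apply/negP => hwj; apply: (hall j); split; first exact/negP.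
    by apply: contra hj => /eqP hv; apply/eqP; apply: val_inj; exact: hv.
  have := hw (@bm0 2 e); rewrite (bigD1 ja) //= big1 ?addr0; last first.
    by move=> j hj; rewrite hz // mulr0.
  rewrite mon0 mul1r => hwa.
  have : j0 = ja by apply/eqP; apply: contraR hj0 => /hz ->; rewrite eqxx.
  by move=> e0; move: hj0; rewrite e0 hwa eqxx.
exists (val j); split => //; first exact: (valP j).
move=> [k [hk [C [[k0 [p [hdeg hC]]] hcov]]]].
have hs : (msize p <= e.+1)%N by rewrite hdeg ltnS; case/andP: hk.
have hoth : forall j', j' != j -> peval2 p (val (val j')) = 0.
  move=> j' hj'; rewrite -[_ = 0]/((fun z => peval2 p z = 0) _) -hC; apply: hcov.
  exists (val j') => //; rewrite !inE (valP j') andbT.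
  by apply: contra hj' => /eqP hv; apply/eqP; apply: val_inj.
have hsum : \sum_j' w j' * peval2 p (val (val j')) = 0.
  transitivity (\sum_(m : Mon) p@_m * \sum_j' mon m (val (val j')) * w j').
    rewrite (eq_bigr (fun j' => \sum_(m : Mon) w j' * (p@_m * mon m (val (val j'))))); last first.
      by move=> j' _; rewrite peval_sum // mulr_sumr.
    rewrite exchange_big /=; apply: eq_bigr => m _; rewrite mulr_sumr.
    by apply: eq_bigr => j' _; rewrite mulrCA [w j' * _]mulrC.
  by rewrite big1 // => m _; rewrite hw mulr0.
move: hsum; rewrite (bigD1 j) //= big1 ?addr0; last by move=> j' hj'; rewrite hoth // mulr0.
move=> /eqP; rewrite mulf_eq0 (negbTE hj) /= => /eqP hpb.
apply: hg; exists k; split => //; exists C; split.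
  by split => //; exists p.
move=> z [b hb <-].
have [->|hbj] := eqVneq b (val j).
  by rewrite hC.
apply: hcov; exists b => //; by rewrite !inE hbj hb.
Qed.


End P.

Theorem lemma16 (R : realType) (e : nat) (A : {fset (R * R)}) :
  ~ in_curve_le e (fun z => z \in A) ->
  let calR := [set B : {set A} |
                 (#|B| == 'C(e.+2, 2))%N &&
                 `[< ~ in_curve_le e (fun z => exists2 b : A, b \in B & val b = z) >] ] in
  (#|calR|%:R : R) >= (#|` A|%:R : R) / 2 ^+ ('C(e.+2, 2)).-1.
Proof.
move=> hA; cbv zeta.
set calR := [set B : {set A} | _].
set N := 'C(e.+2, 2).
have hN : #|{: 'X_{1..2 < e.+1}}| = N by apply: card_Mon.
have claim : forall a : A, exists B, B \in calR /\ a \in B.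
  move=> a.
  pose Q (B : {set A}) := (a \in B) && `[< good e B >].
  have QT : Q setT.
    rewrite /Q inE /=; apply/asboolP => [[k [hk [C [hC hcov]]]]].
    apply: hA; exists k; split => //; exists C; split => //.
    by move=> z hz; apply: hcov; exists (FSetSub hz); rewrite ?inE.
  case: (arg_minnP (fun B : {set A} => #|B|) QT) => B /andP [haB /asboolP hg] hmin.
  have hle : (#|B| <= N)%N.
    rewrite leqNgt; apply/negP => hlt; rewrite -hN in hlt.
    have [b [hbB hba hgb]] := good_remove haB hg hlt.
    have := hmin (B :\ b); rewrite /Q !inE eq_sym hba haB /=.
    have -> : `[< good e (B :\ b) >] by apply/asboolP.
    move=> /(_ isT); by rewrite (cardsD1 b B) hbB add1n ltnn.
  have hge : (N <= #|B|)%N by rewrite -hN; apply: (good_card haB hg).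
  exists B; split => //.
  rewrite inE; apply/andP; split; first by apply/eqP; lia.
  by apply/asboolP.
have hcount : (#|` A| <= #|calR| * N)%N.
  rewrite cardfE -[X in (X <= _)%N]sum1_card.
  apply: (@leq_trans (\sum_(a : A) \sum_(B in calR) (a \in B : nat))).
    apply: leq_sum => a _; have [B [hB haB]] := claim a.
    by rewrite (bigD1 B) //= haB.
  rewrite exchange_big /= -sum_nat_const; apply: leq_sum => B hB.
  move: hB; rewrite inE => /andP [/eqP hc _]; rewrite /N -hc.
  rewrite -sum1_card [in X in (_ <= X)%N]big_mkcond /=.
  by apply: leq_sum => a _; case: (a \in B).
have hN2 : (N <= 2 ^ N.-1)%N.
  have hN0 : (0 < N)%N by rewrite bin_gt0.
  by rewrite -{1}(prednK hN0); apply: ltn_expl.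
rewrite ler_pdivrMr ?exprn_gt0 ?ltr0n //.
have -> : (2 : R) ^+ N.-1 = (2 ^ N.-1)%N%:R by rewrite natrX.
rewrite -natrM ler_nat; apply: leq_trans hcount _.
by rewrite leq_mul2l hN2 orbT.
Qed.
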